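(* Let $\mathcal{I}$ be an ideal on $\omega$ such that $\mathrm{fin}\subseteq\mathcal{I}$. Then there exist $A, C \in [\omega]^\omega$ such that $A = \omega\setminus C$ and $\mathcal{I}|A$ is isomorphic to $\mathcal{I}$.
   Context: $\mathrm{fin}$ is the ideal of finite subsets of $\omega$. For $A\subseteq\omega$, $\mathcal{I}|A = \{I \subseteq A : I\in\mathcal{I}\}$, an ideal on $A$. Ideals $\mathcal{I}$ on $\Omega$ and $\mathcal{J}$ on $\Omega'$ are isomorphic if there is a bijection $f:\Omega\to\Omega'$ such that for every $B\subseteq\Omega'$, $B\in\mathcal{J}$ iff $f^{-1}(B)\in\mathcal{I}$. *)

(* Defs.v *)
From Stdlib Require Import Arith.

Definition pset (T : Type) := T -> Prop.

Definition is_ideal {T : Type} (I : pset (pset T)) : Prop :=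
  I (fun _ => False) /\
  (forall A B : pset T, I B -> (forall x, A x -> B x) -> I A) /\
  (forall A B : pset T, I A -> I B -> I (fun x => A x \/ B x)) /\
  ~ I (fun _ => True).

Definition finite_nat (A : pset nat) : Prop := exists m, forall n, A n -> n < m.

Definition infinite_nat (A : pset nat) : Prop := ~ finite_nat A.

Definition contains_fin (I : pset (pset nat)) : Prop :=
  forall A, finite_nat A -> I A.

(* I|A = { X ⊆ A : X ∈ I }, an ideal on (the subtype) A *)
Definition restrict {T : Type} (I : pset (pset T)) (A : pset T)
  : pset (pset {x : T | A x}) :=
  fun S => I (fun x => exists h : A x, S (exist _ x h)).

Definition bijective_fun {X Y : Type} (f : X -> Y) : Prop :=
  (forall x y, f x = f y -> x = y) /\ (forall y, exists x, f x = y).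

Definition ideal_iso {X Y : Type} (I : pset (pset X)) (J : pset (pset Y)) : Prop :=
  exists f : X -> Y, bijective_fun f /\
    forall B : pset Y, J B <-> I (fun x => B (f x)).

(* Main.v *)
Require Import Defs.
From Stdlib Require Import Arith Lia Classical ClassicalEpsilon ProofIrrelevance.

Lemma ideal_ext (I : pset (pset nat)) (X Y : pset nat) :
  is_ideal I -> (forall x, X x <-> Y x) -> I X -> I Y.
Proof. intros [_ [Hs _]] He HX. apply (Hs Y X HX). intros x; apply He. Qed.

Lemma key (I : pset (pset nat)) (A : pset nat) (g : nat -> nat) :
  is_ideal I -> (forall x y, g x = g y -> x = y) ->
  (forall x, A x <-> exists y, g y = x) ->
  (forall B, I B <-> I (fun x => exists y, B y /\ g y = x)) ->
  ideal_iso (restrict I A) I.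
Proof.
  intros HI Hinj HA HB.
  set (f := fun a : {x : nat | A x} =>
    proj1_sig (constructive_indefinite_description _ (proj1 (HA (proj1_sig a)) (proj2_sig a)))).
  assert (Hf : forall a, g (f a) = proj1_sig a).
  { intros a. unfold f. destruct (constructive_indefinite_description _ _); simpl; auto. }
  exists f. split. split.
  - intros [x hx] [y hy] E. pose proof (Hf (exist _ x hx)) as E1.
    pose proof (Hf (exist _ y hy)) as E2. simpl in *. rewrite E in E1.
    rewrite E1 in E2. subst y. f_equal. apply proof_irrelevance.
  - intros y. assert (hy : A (g y)) by (apply HA; eauto).
    exists (exist _ (g y) hy). apply Hinj. rewrite Hf. reflexivity.
  - intros B. unfold restrict. rewrite HB.
    assert (Heq : forall x, (exists y, B y /\ g y = x) <-> (exists hx : A x, B (f (exist _ x hx)))).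
    { intros x; split.
      + intros [y [By Ey]]. subst x. assert (hy : A (g y)) by (apply HA; eauto).
        exists hy. replace (f (exist _ (g y) hy)) with y. exact By.
        apply Hinj. rewrite Hf. reflexivity.
      + intros [hx Bx]. exists (f (exist _ x hx)). split; [exact Bx | apply Hf]. }
    split; intro H; eapply ideal_ext; try exact HI; try exact H; intros x; specialize (Heq x); tauto.
Qed.

Lemma inf_above (C : pset nat) : infinite_nat C -> forall m, exists n, m <= n /\ C n.
Proof.
  intros HC m. apply NNPP. intro Hn. apply HC. exists m. intros n Cn.
  destruct (le_lt_dec m n); auto. exfalso; eauto.
Qed.

Theorem lemma6p1 (I : pset (pset nat)) :
  is_ideal I -> contains_fin I ->
  exists A C : pset nat,
    infinite_nat A /\ infinite_nat C /\
    (forall n, A n <-> ~ C n) /\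
    ideal_iso (restrict I A) I.
Proof.
  intros HI Hfin.
  destruct (classic (exists C, I C /\ infinite_nat C)) as [[C0 [IC0 HC0]] | Hno].
  - pose proof (inf_above C0 HC0) as Hab.
    set (nx := fun m => proj1_sig (constructive_indefinite_description _ (Hab m))).
    assert (Hnx : forall m, m <= nx m /\ C0 (nx m)).
    { intros m. unfold nx. destruct (constructive_indefinite_description _ _); simpl; auto. }
    set (h := fix h k := match k with 0 => nx 0 | S k => nx (S (h k)) end).
    assert (Hinc : forall k, h k < h (S k)).
    { intros k. simpl. destruct (Hnx (S (h k))). lia. }
    assert (Hmono : forall k l, k < l -> h k < h l).
    { intros k l Hkl. induction Hkl. apply Hinc. specialize (Hinc m). lia. }
    assert (Hhinj : forall k l, h k = h l -> k = l).
    { intros k l E. destruct (lt_eq_lt_dec k l) as [[L|L]|L]; auto;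
      apply Hmono in L; lia. }
    assert (HhC : forall k, C0 (h k)). { intros [|k]; simpl; apply Hnx. }
    assert (Hge : forall k, k <= h k).
    { induction k. lia. specialize (Hinc k). lia. }
    set (D := fun x => exists k, h k = x).
    assert (ID : I D).
    { destruct HI as [_ [Hs _]]. apply (Hs D C0 IC0). intros x [k Hk]. subst; auto. }
    set (g := fun y => match excluded_middle_informative (D y) with
                       | left e => h (2 * proj1_sig (constructive_indefinite_description _ e) + 1)
                       | right _ => y end).
    assert (Hg1 : forall k, g (h k) = h (2 * k + 1)).
    { intros k. unfold g. destruct (excluded_middle_informative _) as [e|n].
      - destruct (constructive_indefinite_description _ e) as [k' Hk']; simpl.
        apply Hhinj in Hk'. subst; auto.
      - exfalso; apply n; exists k; auto. }
    assert (Hg2 : forall y, ~ D y -> g y = y).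
    { intros y n. unfold g. destruct (excluded_middle_informative _); tauto. }
    set (C := fun x => exists k, h (2 * k) = x).
    exists (fun x => ~ C x), C. split; [|split; [|split]].
    + intros [m Hm]. assert (Hn : ~ C (h (2 * m + 1))).
      { intros [k Hk]. apply Hhinj in Hk. lia. }
      specialize (Hm _ Hn). specialize (Hge (2*m+1)). lia.
    + intros [m Hm]. specialize (Hm (h (2 * m)) (ex_intro _ m eq_refl)).
      specialize (Hge (2*m)). lia.
    + tauto.
    + apply key with g; auto.
      * intros x y E. destruct (classic (D x)) as [[k Hk]|nx1];
        destruct (classic (D y)) as [[l Hl]|ny]; subst.
        -- rewrite !Hg1 in E. apply Hhinj in E. f_equal. lia.
        -- rewrite Hg1, Hg2 in E; auto. exfalso; apply ny. eexists; eauto.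
        -- rewrite Hg1, Hg2 in E; auto. exfalso; apply nx1. eexists; eauto.
        -- rewrite !Hg2 in E; auto.
      * intros x. split.
        -- intros nC. destruct (classic (D x)) as [[m Hm]|nD].
           ++ subst x. destruct (Nat.Even_or_Odd m) as [[k Hk]|[k Hk]].
              ** exfalso. apply nC. exists k. subst; f_equal.
              ** exists (h k). rewrite Hg1. subst. f_equal.
           ++ exists x. apply Hg2; auto.
        -- intros [y Hy] [k Hk]. subst x. destruct (classic (D y)) as [[m Hm]|nD].
           ++ subst y. rewrite Hg1 in Hk. apply Hhinj in Hk. lia.
           ++ rewrite Hg2 in Hk; auto. apply nD. eexists; eauto.
      * intros B. destruct HI as [H0 [Hs [Hu Hp]]]. split; intro HBI.
        -- apply (Hs _ (fun x => B x \/ D x)). apply Hu; auto.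
           intros x [y [By Ey]]. subst x. destruct (classic (D y)) as [[m Hm]|nD].
           ++ subst y. rewrite Hg1. right. eexists; eauto.
           ++ rewrite Hg2; auto.
        -- apply (Hs _ (fun x => (exists y, B y /\ g y = x) \/ D x)). apply Hu; auto.
           intros x Bx. destruct (classic (D x)); auto. left. exists x. split; auto.
  - assert (Hfe : forall X, I X <-> finite_nat X).
    { intros X. split; auto. intros IX. apply NNPP. intro nf. apply Hno. eauto. }
    set (C := fun x => exists k, x = 2 * k + 1).
    exists (fun x => ~ C x), C. split; [|split; [|split]].
    + intros [m Hm]. assert (Hn : ~ C (2 * m)).
      { intros [k Hk]. lia. }
      specialize (Hm _ Hn). lia.
    + intros [m Hm]. specialize (Hm (2 * m + 1) (ex_intro _ m eq_refl)). lia.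
    + tauto.
    + apply key with (fun y => 2 * y); auto.
      * intros; lia.
      * intros x. split.
        -- intros nC. destruct (Nat.Even_or_Odd x) as [[k Hk]|[k Hk]].
           ++ exists k. lia.
           ++ exfalso. apply nC. exists k. lia.
        -- intros [y Hy] [k Hk]. lia.
      * intros B. rewrite !Hfe. split.
        -- intros [m Hm]. exists (2 * m). intros x [y [By Ey]]. specialize (Hm y By). lia.
        -- intros [m Hm]. exists m. intros y By. specialize (Hm (2*y) (ex_intro _ y (conj By eq_refl))). lia.
Qed.
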